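(* Let $\Sigma^*$ be an $n\times n$ positive definite matrix with $\Omega^*=(\Sigma^* )^{-1}$ whose conditional independence structure is a tree $T^*$, let $D^*$ be a diagonal matrix with nonnegative entries, let $a$ be a leaf of $T^*$ with neighbor $b$, and let $c$ satisfy $0<c<D^*_{bb}$. Define $\Sigma^q$ by $\Sigma^q_{aa}=\Sigma^*_{aa}-\frac{1}{\Omega^*_{aa}}$, $\Sigma^q_{bb}=\Sigma^*_{bb}+c$, and $\Sigma^q_{ij}=\Sigma^*_{ij}$ for all other $(i,j)$. Then $\Sigma^q$ is a covariance (positive definite) matrix and its conditional independence structure is the tree obtained from $T^*$ by exchanging the positions of nodes $a$ and $b$.
   Context: For an $n\times n$ positive definite matrix $\Sigma$ with inverse $\Omega$, its conditional independence structure is the graph on $\{1,\dots,n\}$ with an edge $\{i,j\}$ ($i\neq j$) iff $\Omega_{ij}\neq 0$. ''Exchanging the positions of $a$ and $b$'' means applying to $T^*$ the relabeling of vertices that swaps $a$ and $b$. *)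

(* Defs.v *)
From HB Require Import structures.
From mathcomp Require Import all_boot all_order all_fingroup all_algebra.
Set Implicit Arguments. Unset Strict Implicit. Unset Printing Implicit Defensive.
Import Order.TTheory GRing.Theory Num.Theory.
Local Open Scope ring_scope.

Definition posdef (R : realFieldType) (n : nat) (A : 'M[R]_n) : Prop :=
  A^T = A /\ forall x : 'rV[R]_n, x != 0 -> 0 < (x *m A *m x^T) 0 0.

Definition ci_edge (R : realFieldType) (n : nat) (A : 'M[R]_n) : rel 'I_n :=
  fun i j => (i != j) && (invmx A i j != 0).

Definition is_tree (T : finType) (e : rel T) : Prop :=
  (forall x y, connect e x y) /\
  ~ (exists s : seq T, [/\ uniq s, 3 <= size s & path.cycle e s])%N.

Definition degree (T : finType) (e : rel T) (v : T) : nat := #|[set w | e v w]|.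

(* Main.v *)
Require Import Defs.
From HB Require Import structures.
From mathcomp Require Import all_boot all_order all_fingroup all_algebra.
From mathcomp Require Import ring lra.
Import Order.TTheory GRing.Theory Num.Theory.
Local Open Scope ring_scope.
Set Warnings "-notation-overridden,-ambiguous-paths".
Set Implicit Arguments. Unset Strict Implicit.
Lemma sum_split2 (R : nmodType) n (a b : 'I_n) (F : 'I_n -> R) : a != b ->
  \sum_x F x = F a + F b + \sum_(x | (x != a) && (x != b)) F x.
Proof.
move=> ab; rewrite (bigD1 a) //= (bigD1 b) 1?eq_sym //= addrA.
by congr (_ + _); apply: eq_bigl => x; rewrite andbC.
Qed.

Lemma quad_delta (R : realFieldType) n (x : 'rV[R]_n) b :
  (x *m (\matrix_(i, j) ((i == b) && (j == b))%:R) *m x^T) 0 0 = x 0 b * x 0 b.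
Proof.
rewrite mxE (bigD1 b) //= big1 ?addr0.
  rewrite !mxE (bigD1 b) //= big1 ?addr0; first by rewrite !mxE eqxx mulr1.
  by move=> i ib; rewrite !mxE (negbTE ib) mulr0.
move=> j jb; rewrite !mxE big1 ?mul0r // => i _; by rewrite mxE (negbTE jb) andbF mulr0.
Qed.

Lemma addmx_ij (R : nmodType) m n (A B : 'M[R]_(m, n)) i j :
  (A + B) i j = A i j + B i j.
Proof. by rewrite mxE. Qed.

Lemma scalemx_ij (R : pzSemiRingType) m n (c : R) (A : 'M[R]_(m, n)) i j :
  (c *: A) i j = c * A i j.
Proof. by rewrite mxE. Qed.

Lemma quad_e (R : realFieldType) n (M : 'M[R]_n) b :
  ((\row_k ((k == b)%:R : R)) *m M *m (\row_k ((k == b)%:R : R))^T) 0 0 = M b b.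
Proof.
rewrite mxE (bigD1 b) //= big1 ?addr0.
  rewrite !mxE eqxx mulr1 (bigD1 b) //= big1 ?addr0; first by rewrite !mxE eqxx mul1r.
  by move=> i ib; rewrite !mxE (negbTE ib) mul0r.
by move=> j jb; rewrite !mxE (negbTE jb) mulr0.
Qed.

Unset Implicit Arguments.

Ltac simpb := repeat match goal with
 | H : is_true (?x != ?y) |- context [?x == ?y] => rewrite (negbTE H)
 | H : is_true (?x != ?y) |- context [?y == ?x] => rewrite [y == x]eq_sym (negbTE H)
 | |- context [?x == ?x] => rewrite eqxx
 end; rewrite /=.


Theorem proposition1 (R : realFieldType) (n : nat) (S D : 'M[R]_n)
    (a b : 'I_n) (c : R) :
  posdef S ->
  is_tree (ci_edge S) ->
  is_diag_mx D -> (forall i, 0 <= D i i) ->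
  degree (ci_edge S) a = 1%N -> ci_edge S a b ->
  0 < c -> c < D b b ->
  let Sq := \matrix_(i, j)
      (if (i == a) && (j == a) then S a a - 1 / (invmx S) a a
       else if (i == b) && (j == b) then S b b + c
       else S i j) in
  posdef Sq /\
  (forall i j, ci_edge Sq i j = ci_edge S (tperm a b i) (tperm a b j)).
Proof.
move=> [Ssym Spd] _ _ _ deg1 eab c0 _ Sq.
have /andP[ab Omab] := eab.
have ba : b != a by rewrite eq_sym.
have Sunit : S \in unitmx.
  rewrite unitmxE unitfE; apply/negP => /det0P [v v0 vS].
  by have := Spd v v0; rewrite vS mul0mx mxE ltxx.
pose Om : 'M[R]_n := invmx S.
have OmE : invmx S = Om by [].
rewrite OmE in Omab Sq *.
have hSO : S *m Om = 1%:M by rewrite mulmxV.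
have hOS : Om *m S = 1%:M by rewrite mulVmx.
have hSOe i j : \sum_x S i x * Om x j = (i == j)%:R.
  by have /matrixP /(_ i j) := hSO; rewrite !mxE.
have hOSe i j : \sum_x Om i x * S x j = (i == j)%:R.
  by have /matrixP /(_ i j) := hOS; rewrite !mxE.
have Ss i j : S j i = S i j by have /matrixP /(_ i j) := Ssym; rewrite mxE.
have Oms i j : Om j i = Om i j.
  have : Om^T = Om by rewrite /Om trmx_inv Ssym.
  by move/matrixP/(_ i j); rewrite mxE.
have hleaf j : j != a -> j != b -> Om a j = 0.
  move=> ja jb; apply/eqP; apply: contraNT jb => Omj.
  move: deg1; rewrite /degree => /eqP /cards1P [x hx].
  have : j \in [set w | ci_edge S a w] by rewrite inE /ci_edge eq_sym ja.
  have : b \in [set w | ci_edge S a w] by rewrite inE.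
  by rewrite hx !inE => /eqP -> /eqP ->.
have Sbb : 0 < S b b.
  rewrite -(@quad_e _ _ S b); apply: Spd; apply/eqP => /matrixP /(_ 0 b).
  by rewrite !mxE eqxx => /eqP; rewrite oner_eq0.
have hrow y : Om a a * S a y + Om a b * S b y = (a == y)%:R.
  rewrite -hOSe (sum_split2 _ ab) big1 ?addr0 // => x /andP [xa xb].
  by rewrite hleaf // mul0r.
have om0 : Om a a != 0.
  apply/eqP => om0; have := hrow b; rewrite om0 mul0r add0r (negbTE ab) => /eqP.
  by rewrite mulf_eq0 (negbTE Omab) /= => /eqP Sb0; move: Sbb; rewrite Sb0 ltxx.
pose k := - Om a b / Om a a.
have hSay y : y != a -> S a y = k * S b y.
  move=> ya; have := hrow y; rewrite eq_sym (negbTE ya) => h.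
  apply: (mulfI om0).
  have -> : Om a a * S a y = - (Om a b * S b y).
    by apply/eqP; rewrite -subr_eq0 opprK h.
  by rewrite /k; field.
have k0 : k != 0 by rewrite /k mulf_neq0 ?oppr_eq0 ?invr_eq0.
have c0' : c != 0 by rewrite gt_eqF.
have hSia i : i != a -> S i a = k * S i b by move=> ia; rewrite -Ss hSay // Ss.
have hSaa : S a a = (1 - Om a b * S a b) / Om a a.
  have := hrow a; rewrite eqxx mulr1n (Ss a b) => h.
  have h2 : Om a a * S a a = 1 - Om a b * S a b by rewrite -h addrK.
  by apply: (mulfI om0); rewrite h2; field.
have hrest i j : \sum_(x | (x != a) && (x != b)) S i x * Om x j
    = (i == j)%:R - S i a * Om a j - S i b * Om b j.
  by rewrite -hSOe (sum_split2 _ ab); ring.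
pose qaa := (Om b b - Om a b ^+ 2 / Om a a) / k ^+ 2 + 1 / (c * k ^+ 2).
pose Oq := \matrix_(i, j)
  (if i == a then (if j == a then qaa else if j == b then -1 / (c * k) else Om b j / k)
   else if i == b then (if j == a then -1 / (c * k) else if j == b then 1 / c else 0)
   else (if j == a then Om i b / k else if j == b then 0 else Om i j)).
have hSqOq : Sq *m Oq = 1%:M.
  apply/matrixP => i j; rewrite /Sq /Oq !mxE (sum_split2 _ ab) !mxE.
  rewrite (eq_bigr (fun x => S i x * (if j == a then Om x b / k
                else if j == b then 0 else Om x j))); last first.
    by move=> x /andP[xa xb]; rewrite !mxE (negbTE xa) (negbTE xb) !andbF.
  case: (eqVneq j a) => [->|ja].
    rewrite eqxx (eq_bigr (fun x => S i x * Om x b / k)) => [|x _]; last by rewrite mulrA.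
    rewrite -mulr_suml hrest.
    case: (eqVneq i a) => [->|ia]; [|case: (eqVneq i b) => [->|ib]]; simpb.
    - by rewrite hSaa /qaa /k; field; rewrite ?om0 ?Omab ?c0'.
    - by rewrite (Ss a b) (hSay b ba) /qaa /k; field; rewrite ?om0 ?Omab ?c0'.
    - by rewrite (hSia i ia) /qaa /k; field; rewrite ?om0 ?Omab ?c0'.
  case: (eqVneq j b) => [->|jb].
    rewrite big1 => [|x _]; simpb; last by rewrite mulr0.
    case: (eqVneq i a) => [->|ia]; [|case: (eqVneq i b) => [->|ib]]; simpb.
    - by rewrite hSaa (hSay b ba) /k; field; rewrite ?om0 ?Omab ?c0'.
    - by rewrite (Ss a b) (hSay b ba) /k; field; rewrite ?om0 ?Omab ?c0'.
    - by rewrite (hSia i ia) /k; field; rewrite ?om0 ?Omab ?c0'.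
  simpb; rewrite hrest (hleaf j) //.
  case: (eqVneq i a) => [->|ia]; [|case: (eqVneq i b) => [->|ib]]; simpb.
  - by rewrite hSaa (hSay b ba) /k; field; rewrite ?om0 ?Omab ?c0'.
  - by rewrite (Ss a b) (hSay b ba) /k; field; rewrite ?om0 ?Omab ?c0'.
  - by rewrite (hSia i ia) /k; field; rewrite ?om0 ?Omab ?c0'.
have [Squ _] := mulmx1_unit hSqOq.
have invE : invmx Sq = Oq.
  by rewrite -[Oq]mul1mx -(mulVmx Squ) -mulmxA hSqOq mulmx1.
split; last first.
  move=> i j; rewrite /ci_edge invE OmE (inj_eq (@perm_inj _ (tperm a b))).
  case: (eqVneq i j) => [->|ij]; first by [].
  rewrite /= /Oq mxE; move: ij.
  have q1 : -1 / (c * k) != 0.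
    by rewrite mulf_neq0 // ?oppr_eq0 ?oner_eq0 // invr_eq0 mulf_neq0.
  case: (eqVneq i a) => [->|ia]; [|case: (eqVneq i b) => [->|ib]];
  case: (eqVneq j a) => [->|ja]; try (case: (eqVneq j b) => [->|jb]);
  rewrite ?tpermL ?tpermR ?tpermD //; simpb; try done.
  - by move=> _; rewrite (Oms a b) Omab.
  - by move=> _; rewrite mulf_eq0 invr_eq0 (negbTE k0) orbF.
  - by move=> _; rewrite (hleaf j) // eqxx.
  - by move=> _; rewrite mulf_eq0 invr_eq0 (negbTE k0) orbF.
  - by move=> _; rewrite -(Oms i a) (hleaf i) // eqxx.
pose L : 'M[R]_n := \matrix_(i, j) (if i == a then (j == b)%:R * k else (i == j)%:R).
pose E : 'M[R]_n := \matrix_(i, j) ((i == b) && (j == b))%:R.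
have hL (M : 'M[R]_n) i y : (L *m M) i y = if i == a then k * M b y else M i y.
  rewrite mxE; case: (eqVneq i a) => [->|ia].
    rewrite (bigD1 b) //= big1 ?addr0 => [|x xb]; rewrite !mxE !eqxx.
      by rewrite mulr1n mul1r.
    by rewrite (negbTE xb) mulr0n !mul0r.
  rewrite (bigD1 i) //= big1 ?addr0 => [|x xi]; rewrite !mxE (negbTE ia).
    by rewrite eqxx mulr1n mul1r.
  by rewrite eq_sym (negbTE xi) mulr0n mul0r.
have hSqL : Sq = L *m S *m L^T + c *: E.
  have hLT (M : 'M[R]_n) i y : (M *m L^T) i y = if y == a then k * M i b else M i y.
    rewrite -[M *m L^T]trmxK trmx_mul trmxK mxE hL.
    by case: ifP => _; rewrite !mxE.
  apply/matrixP => i j; rewrite [RHS]mxE hLT !hL /Sq /E !mxE.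
  case: (eqVneq i a) => [->|ia]; [|case: (eqVneq i b) => [->|ib]];
  case: (eqVneq j a) => [->|ja]; try (case: (eqVneq j b) => [->|jb]); simpb;
    rewrite ?mulr0 ?mulr1 ?addr0 //.
  - by rewrite hSaa (hSay b ba) /k; field; rewrite ?om0 ?Omab ?c0'.
  - by rewrite (hSay b ba).
  - by rewrite (hSay j ja).
  - by rewrite (Ss a b) (hSay b ba).
  - by rewrite (hSia i ia).
have ET : E^T = E by apply/matrixP => i j; rewrite !mxE andbC.
split.
  by rewrite hSqL linearD linearZ /= ET !trmx_mul trmxK Ssym mulmxA.
move=> x x0.
have -> : x *m Sq *m x^T = x *m L *m S *m (x *m L)^T + c *: (x *m E *m x^T).
  by rewrite hSqL mulmxDr mulmxDl -scalemxAr -scalemxAl trmx_mul !mulmxA.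
set P := x *m L *m S *m (x *m L)^T.
rewrite addmx_ij scalemx_ij (quad_delta x b).
have hcolb : (x *m L) 0 b = k * x 0 a + x 0 b.
  rewrite mxE (sum_split2 _ ab) !mxE !eqxx (negbTE ba) big1 => [|i /andP[ia ib]].
    by rewrite mulr1n mul1r mulr1 addr0 mulrC.
  by rewrite /L mxE (negbTE ia) (negbTE ib) mulr0n mulr0.
have hcolj j : j != a -> j != b -> (x *m L) 0 j = x 0 j.
  move=> ja jb; rewrite mxE (sum_split2 _ ab) !mxE.
  rewrite (bigD1 j) ?ja ?jb //= big1 => [|i /andP[/andP[ia ib] ij]].
    rewrite /L mxE (negbTE ja) !eqxx (negbTE ba) (negbTE jb) [b == j]eq_sym (negbTE jb).
    by rewrite mulr1n mulr1 mulr0n !mulr0 mul0r mulr0 !add0r addr0.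
  by rewrite /L mxE (negbTE ia) (negbTE ij) mulr0n mulr0.
case: (eqVneq (x *m L) 0) => [xL0|xL].
  rewrite /P xL0 !mul0mx mxE add0r.
  have xb0 : x 0 b != 0.
    apply: contraNneq x0 => xb0; apply/eqP/rowP => j; rewrite mxE.
    case: (eqVneq j a) => [->|ja].
      have := hcolb; rewrite xL0 mxE xb0 addr0 => /esym/eqP.
      by rewrite mulf_eq0 (negbTE k0) => /eqP.
    case: (eqVneq j b) => [->|jb] //.
    by rewrite -hcolj // xL0 mxE.
  by rewrite mulr_gt0 // -expr2 lt0r sqr_ge0 andbT sqrf_eq0.
have hP := Spd _ xL.
apply: (lt_le_trans hP); rewrite lerDl; apply: mulr_ge0; [exact: ltW | by rewrite -expr2 sqr_ge0].
Qed.
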